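(* Let $V'$ be a $\mathbb{Z}$-graded vertex algebra and let $V$ be a $\mathbb{Z}$-graded vertex subalgebra of $V'$ such that $V=C_2(V)$. If $V'$ is completely reducible as a weak $V$-module, then $V'=C_2(V')$; in particular $V'$ is $C_2$-cofinite.
   Context: A $\mathbb{Z}$-graded vertex algebra is a vertex algebra $V=\bigoplus_{n\in\mathbb{Z}}V_n$ with a conformal vector $\omega\in V_2$ whose modes $L(n)$ satisfy the Virasoro relations, $L(0)|_{V_n}=n$, and $Y(L(-1)v,z)=\frac{d}{dz}Y(v,z)$. A vertex subalgebra is a subspace containing $\mathbf{1}$ that is itself a vertex algebra under the restricted operations. Modes: $Y(v,z)=\sum_nv_nz^{-n-1}$. $C_2(V)=\mathrm{Span}_{\mathbb{C}}\{u_{-2}v\mid u,v\in V\}$; $V$ is $C_2$-cofinite if $\dim V/C_2(V)<\infty$. A weak module is completely reducible if it is a direct sum of finitely many irreducible weak modules. *)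

(* Defs.v *)
From HB Require Import structures.
From mathcomp Require Import all_boot all_order all_algebra.
Set Implicit Arguments. Unset Strict Implicit. Unset Printing Implicit Defensive.
Import Order.TTheory GRing.Theory Num.Theory.
Local Open Scope ring_scope.

Section VertexAlgebra.
Variable K : numClosedFieldType.
Variable V : lmodType K.

(* Y u n v = u_n v, the modes of the vertex operator Y(u,z) = sum_n u_n z^{-n-1} *)
Definition modeT := V -> int -> V -> V.

Definition gbinom (r : int) (i : nat) : K :=
  (\prod_(j < i) (r%:~R - j%:R)) / (i`!)%:R.

Definition subspace_on (S : V -> Prop) : Prop :=
  S 0 /\ forall (a : K) x y, S x -> S y -> S (a *: x + y).

(* Partial sums (up to M terms) of the two sides of the Borcherds / Jacobi
   identity:  sum_i binom(p,i) (u_{r+i} v)_{p+q-i} w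
            = sum_i (-1)^i binom(r,i) (u_{p+r-i} v_{q+i} w - (-1)^r v_{q+r-i} u_{p+i} w) *)
Definition jacobiL (Y : modeT) (u v w : V) (p q r : int) (M : nat) : V :=
  \sum_(i < M) gbinom p i *: Y (Y u (r + (i : nat)%:Z) v) (p + q - (i : nat)%:Z) w.

Definition jacobiR (Y : modeT) (u v w : V) (p q r : int) (M : nat) : V :=
  \sum_(i < M) ((-1) ^+ (i : nat) * gbinom r i) *:
     (Y u (p + r - (i : nat)%:Z) (Y v (q + (i : nat)%:Z) w)
      - (-1) ^+ (odd `|r|%N) *: Y v (q + r - (i : nat)%:Z) (Y u (p + (i : nat)%:Z) w)).

(* Taking S = (fun _ => True)
   gives a Z-graded vertex algebra on V itself; for a general S this says that S
   is a Z-graded vertex subalgebra (same vacuum, restricted vertex operators,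
   its own conformal vector omega). *)
Record is_ZGVA (S : V -> Prop) (Y : modeT) (one omega : V) (c : K) : Prop := {
  zgva_subspace : subspace_on S;
  zgva_one : S one;
  zgva_omega : S omega;
  zgva_closed : forall u v n, S u -> S v -> S (Y u n v);
  zgva_linl : forall (a : K) u u' n v, S u -> S u' -> S v ->
      Y (a *: u + u') n v = a *: Y u n v + Y u' n v;
  zgva_linr : forall (a : K) u n v v', S u -> S v -> S v' ->
      Y u n (a *: v + v') = a *: Y u n v + Y u n v';
  zgva_trunc : forall u v, S u -> S v ->
      exists N : int, forall n, N <= n -> Y u n v = 0;
  zgva_vac : forall n v, S v -> Y one n v = (if n == -1 then v else 0);
  zgva_create : forall u, S u -> Y u (-1) one = u /\ (forall n, 0 <= n -> Y u n one = 0);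
  zgva_jacobi : forall u v w p q r, S u -> S v -> S w ->
      exists N : nat, forall M, (N <= M)%N -> jacobiL Y u v w p q r M = jacobiR Y u v w p q r M;
  (* L(n) = omega_{n+1} : Virasoro relations with central charge c *)
  zgva_vir : forall (m n : int) v, S v ->
      Y omega (m + 1) (Y omega (n + 1) v) - Y omega (n + 1) (Y omega (m + 1) v)
      = (m - n)%:~R *: Y omega (m + n + 1) v
        + (if m + n == 0 then ((m ^+ 3 - m)%:~R / 12%:R) * c else 0) *: v;
  (* omega in V_2, i.e. L(0) omega = 2 omega *)
  zgva_omega_wt : Y omega 1 omega = 2%:R *: omega;
  (* V = (+)_{n in Z} V_n with V_n = { v | L(0) v = n v } *)
  zgva_graded : forall v, S v -> exists s : seq (int * V),
      (forall x, x \in s -> S x.2 /\ Y omega 1 x.2 = x.1%:~R *: x.2)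
      /\ v = \sum_(x <- s) x.2;
  (* Y(L(-1)u, z) = d/dz Y(u, z), i.e. (L(-1)u)_n = -n u_{n-1} *)
  zgva_deriv : forall u n w, S u -> S w ->
      Y (Y omega 0 u) n w = - (n%:~R *: Y u (n - 1) w)
}.

Definition C2_span (S : V -> Prop) (Y : modeT) (x : V) : Prop :=
  exists s : seq (K * (V * V)),
    (forall t, t \in s -> S t.2.1 /\ S t.2.2)
    /\ x = \sum_(t <- s) t.1 *: Y t.2.1 (-2) t.2.2.

(* dim S / C_2(S) < infinity *)
Definition C2_cofinite (S : V -> Prop) (Y : modeT) : Prop :=
  exists (n : nat) (b : 'I_n -> V), (forall i, S (b i)) /\
    forall x, S x -> exists (a : 'I_n -> K) (y : V),
      C2_span S Y y /\ x = \sum_(i < n) a i *: b i + y.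

(* weak S-submodule of V (V viewed as a weak S-module via Y restricted to S) *)
Definition weak_submodule (S : V -> Prop) (Y : modeT) (W : V -> Prop) : Prop :=
  subspace_on W /\ forall u n w, S u -> W w -> W (Y u n w).

Definition irreducible_submodule (S : V -> Prop) (Y : modeT) (W : V -> Prop) : Prop :=
  weak_submodule S Y W /\ (exists w, W w /\ w <> 0) /\
  forall W' : V -> Prop, weak_submodule S Y W' -> (forall x, W' x -> W x) ->
    (forall x, W' x -> x = 0) \/ (forall x, W x -> W' x).

Definition completely_reducible (S : V -> Prop) (Y : modeT) : Prop :=
  exists (k : nat) (W : 'I_k -> V -> Prop),
    (forall i, irreducible_submodule S Y (W i)) /\
    (forall x, exists w : 'I_k -> V, (forall i, W i (w i)) /\ x = \sum_(i < k) w i) /\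
    (forall w : 'I_k -> V, (forall i, W i (w i)) -> \sum_(i < k) w i = 0 ->
       forall i, w i = 0).

End VertexAlgebra.

(* Main.v *)
Require Import Defs.
From HB Require Import structures.
From mathcomp Require Import all_boot all_order all_algebra.
Import Order.TTheory GRing.Theory Num.Theory.
Local Open Scope ring_scope.

Lemma L1 (a c : int) : -1 + a - c = a - (1 + c).
Proof. by rewrite opprD addrA (addrC (-1)). Qed.
Lemma L2 (a c : int) : a - c - 1 = a - (1 + c).
Proof. by rewrite opprD addrA -!addrA (addrC (-c)). Qed.

Section Aux.
Variables (K : numClosedFieldType) (V' : lmodType K) (Y : modeT V').

Local Notation C2 := (C2_span (fun _ : V' => True) Y).

Lemma C2_0 : C2 0.
Proof. by exists [::]; split => //; rewrite big_nil. Qed.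

Lemma C2_add x y : C2 x -> C2 y -> C2 (x + y).
Proof.
move=> [s1 [_ ->]] [s2 [_ ->]]; exists (s1 ++ s2); split; first by [].
by rewrite big_cat.
Qed.

Lemma C2_scale (a : K) x : C2 x -> C2 (a *: x).
Proof.
move=> [s [_ ->]]; exists [seq (a * t.1, t.2) | t <- s]; split; first by [].
rewrite big_map scaler_sumr; apply: eq_bigr => t _; by rewrite scalerA.
Qed.

Lemma C2_base u v : C2 (Y u (-2) v).
Proof. by exists [:: (1, (u, v))]; split => //; rewrite big_seq1 scale1r. Qed.

Lemma C2_sum M (F : 'I_M -> V') : (forall i, C2 (F i)) -> C2 (\sum_(i < M) F i).
Proof. move=> HF; apply: big_ind => //; [exact: C2_0 | exact: C2_add]. Qed.

Lemma C2_sub x y : C2 x -> C2 y -> C2 (x - y).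
Proof. by move=> Hx Hy; rewrite -scaleN1r; apply: C2_add => //; apply: C2_scale. Qed.

End Aux.

Theorem proposition2p15 (K : numClosedFieldType) (V' : lmodType K)
  (Y : modeT V') (one omega' : V') (c' : K)
  (HV' : is_ZGVA (fun _ => True) Y one omega' c')
  (V : V' -> Prop) (omega : V') (c : K)
  (HV : is_ZGVA V Y one omega c)
  (HC2 : forall x, V x -> C2_span V Y x)
  (Hcr : completely_reducible V Y) :
  (forall x : V', C2_span (fun _ => True) Y x) /\ C2_cofinite (fun _ => True) Y.
Proof.
have Y0 : forall n x, Y 0 n x = 0.
  move=> n x; have := zgva_linl HV' (-1) n I I I (u := 0) (u' := 0) (v := x).
  by rewrite scaler0 addr0 scaleN1r addNr.
have neg : forall (n : nat) u y, C2_span (fun _ => True) Y (Y u (-2 - n%:Z) y).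
  elim=> [|n IH] u y; first by rewrite subr0; apply: C2_base.
  have H := zgva_deriv HV' (-2 - n%:Z) I I (u := u) (w := y).
  rewrite L2 -intS in H.
  set m : K := (-2 - n%:Z)%:~R in H.
  have nz : - m != 0.
    by rewrite oppr_eq0 /m intr_eq0 -opprD oppr_eq0 -PoszD.
  have -> : Y u (-2 - (n.+1)%:Z) y = (- m)^-1 *: Y (Y omega' 0 u) (-2 - n%:Z) y.
    by rewrite H -scaleNr scalerA mulVf ?scale1r.
  exact/C2_scale/IH.
have g0 : gbinom K 0 0 = 1.
  by rewrite /gbinom big_ord0 fact0 mul1r invr1.
have gS : forall i : nat, gbinom K 0 i.+1 = 0.
  move=> i; rewrite /gbinom big_ord_recl /=.
  by rewrite subr0 mulr0z !mul0r.
have main : forall a b x, C2_span (fun _ => True) Y (Y (Y a (-2) b) (-1) x).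
  move=> a b x.
  have [N HN] := zgva_jacobi HV' 0 (-1) (-2) I I I (u := a) (v := b) (w := x).
  have := HN N.+1 (leqnSn N).
  rewrite /jacobiL big_ord_recl big1 => [|i _]; last by rewrite /= gS scale0r.
  rewrite g0 scale1r addr0 /= addr0 subr0 add0r => ->.
  rewrite /jacobiR; apply: C2_sum => i; apply: C2_scale; apply: C2_sub.
    by rewrite add0r; apply: neg.
  by apply: C2_scale; rewrite L1 -intS; apply: neg.
have Hx : forall x, C2_span (fun _ => True) Y x.
  move=> x; have E := zgva_vac HV' (-1) (v := x) I; rewrite eqxx in E.
  have [s [_ Hs]] := HC2 one (zgva_one HV).
  rewrite -E Hs; elim: s {Hs} => [|t s IH]; first by rewrite big_nil Y0; apply: C2_0.
  rewrite big_cons (zgva_linl HV') //; apply: C2_add => //; exact/C2_scale/main.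
split=> //; exists 0%N, (fun _ => 0); split; first by case.
by move=> x _; exists (fun _ => 0), x; split; [apply: Hx | rewrite big_ord0 add0r].
Qed.
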